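(* Let $p\ge19$ be prime and $n\ge10^6$, and let $r(p,n)$ be the maximum size of a subset of $\mathbb{F}_p^n$ containing no nontrivial three-term arithmetic progression (no $x,x+d,x+2d$ all in the set with $d\ne0$). Then $r(p,n)\ge p^{0.782n}$ and $r(p,n)\ge\big((p+1)/2.0001\big)^{n-2}$. *)

(* Defs.v *)
From HB Require Import structures.
From Stdlib Require Import Reals.
From mathcomp Require Import all_boot all_order all_algebra.
Set Implicit Arguments. Unset Strict Implicit. Unset Printing Implicit Defensive.
Import GRing.Theory.

Definition ap3_freeb (p n : nat) (A : {set 'rV['F_p]_n}) : bool :=
  [forall x : 'rV['F_p]_n, forall d : 'rV['F_p]_n,
     (d != 0%R) ==> ~~ [&& x \in A, (x + d)%R \in A & (x + d *+ 2)%R \in A]].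

Definition r3 (p n : nat) : nat :=
  \max_(A : {set 'rV['F_p]_n} | ap3_freeb A) #|A|.

(* Main.v *)
From Stdlib Require Import Reals Lra Lia Psatz ZArith.
Require Import Defs.
From Stdlib Require Import Reals.
From mathcomp Require Import all_boot all_order all_algebra.
From mathcomp Require Import zify.
Set Implicit Arguments. Unset Strict Implicit. Unset Printing Implicit Defensive.
Import GRing.Theory.

Lemma coord_id (a b c : nat) : a + c = b * 2 ->
  2 * (a ^ 2 + c ^ 2) = 4 * b ^ 2 + ((a - c) + (c - a)) ^ 2.
Proof.
move=> H; case: (leqP a c) => Hac.
- have -> : a - c = 0 by lia.
  rewrite add0n; nia.
- have -> : c - a = 0 by lia.
  rewrite addn0; nia.
Qed.

Section Comb.
Variables (p n : nat).
Hypothesis pr : prime p.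
Hypothesis p2 : 2 < p.
Let h := p.-1./2.
Let T := {ffun 'I_n -> 'I_h.+1}.
Definition emb (f : T) : 'rV['F_p]_n := \row_i ((f i : nat)%:R)%R.
Definition qf (f : T) : nat := \sum_i (f i : nat) ^ 2.

Lemma h_small : h + h < p.
Proof. rewrite /h; have := pr; case: p => // q _ /=. rewrite -[q in _ < q.+1](odd_double_half) addnn. case: (odd q) => /=; lia. Qed.

Lemma emb_inj : injective emb.
Proof.
move=> f g /matrixP E; apply/ffunP => i; apply/val_inj.
have := E ord0 i; rewrite !mxE => /(congr1 val). idtac.
have := ltn_ord (f i); have := ltn_ord (g i); have := h_small.
move=> ? ? ?; rewrite /= !val_Fp_nat // !modn_small //; lia.
Qed.

Lemma emb_ap3 k : ap3_freeb (emb @: [set f : T | qf f == k]).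
Proof.
apply/forallP => x; apply/forallP => d; apply/implyP => dn0.
apply/negP => /and3P [/imsetP [f Hf ->] /imsetP [g Hg Eg] /imsetP [e He Ee]].
rewrite !inE in Hf Hg He.
have Hc : forall i, (f i : nat) + e i = g i * 2.
  move=> i.
  have : (emb f + emb e = emb g *+ 2)%R.
    by rewrite -Ee -Eg mulrnDl addrA mulr2n.
  move/matrixP => /(_ ord0 i); rewrite !mxE -!natrD.
  move=> /(congr1 val); rewrite /= !val_Fp_nat //.
  have := ltn_ord (f i); have := ltn_ord (g i); have := ltn_ord (e i); have := h_small.
  move=> H1 H2 H3 H4; rewrite !modn_small; [move=> ->; by rewrite muln2 addnn| |]; apply: leq_ltn_trans H1; apply: leq_add; by rewrite -ltnS.
have Hs : \sum_i 2 * ((f i : nat) ^ 2 + (e i : nat) ^ 2) =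
   \sum_i 4 * (g i : nat) ^ 2 + \sum_i (((f i : nat) - e i) + (e i - f i)) ^ 2.
  by rewrite -big_split /=; apply: eq_bigr => i _; apply: coord_id.
rewrite -!big_distrr big_split /= -/(qf f) -/(qf e) -/(qf g) in Hs.
move/eqP: Hf => Hf; move/eqP: Hg => Hg; move/eqP: He => He.
rewrite Hf Hg He in Hs.
have /eqP : \sum_i (((f i : nat) - e i) + (e i - f i)) ^ 2 = 0 .
  apply: (@addnI (4*k)); rewrite addn0 -Hs; lia.
rewrite sum_nat_eq0 => /forallP Hz.
have Hfe : forall i, (f i : nat) = e i.
  move=> i; have := Hz i; rewrite implyTb expn_eq0 /= => /eqP; lia.
have Hfg : f = g.
  apply/ffunP => i; apply/val_inj; have := Hc i; rewrite -(Hfe i) addnn -muln2 => /eqP; rewrite eqn_mul2r /= => /eqP. done.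
move/negP: dn0; apply; apply/eqP.
by move: Eg; rewrite -Hfg => /(congr1 (fun v => v - emb f)%R); rewrite (addrC (emb f) d) addrK subrr => ->.
Qed.


Lemma qf_bound (f : T) : qf f <= n * h ^ 2.
Proof.
rewrite /qf; have -> : n * h ^ 2 = \sum_(i < n) h ^ 2 by rewrite sum_nat_const card_ord.
by apply: leq_sum => i _; rewrite leq_exp2r // -ltnS.
Qed.

Lemma count_bound : h.+1 ^ n <= (n * h ^ 2).+1 * r3 p n.
Proof.
have -> : h.+1 ^ n = \sum_(f : T) 1.
  by rewrite sum1_card card_ffun !card_ord.
rewrite (partition_big (fun f : T => (inord (qf f) : 'I_(n * h ^ 2).+1)) predT) //=.
apply: (@leq_trans (\sum_(k < (n * h ^ 2).+1) r3 p n)); last by rewrite sum_nat_const card_ord.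
apply: leq_sum => k _.
have E : forall f : T, (inord (qf f) == k :> 'I_(n * h ^ 2).+1) = (qf f == k).
  by move=> f; rewrite -(inj_eq val_inj) /= inordK // ltnS qf_bound.
under eq_bigl => f do rewrite E.
rewrite sum1_card.
have -> : #|[pred f : T | qf f == k]| = #|emb @: [set f : T | qf f == k]|.
  by rewrite card_imset; [apply: eq_card => f; rewrite inE | apply: emb_inj].
rewrite /r3; apply: (@leq_bigmax_cond _ (fun A : {set 'rV['F_p]_n} => ap3_freeb A) (fun A => #|A|)).
exact: emb_ap3.
Qed.

End Comb.
Import GRing.Theory.
Lemma small q : (19 <= q)%N -> (q < 29)%N -> prime q -> q = 19 \/ q = 23.
Proof.
move=> h1 h2.
have : q \in iota 19 10 by rewrite mem_iota; lia.
rewrite !inE => H hp; repeat (case/orP: H => H); move/eqP: H hp => -> //= _; auto.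
Qed.
Lemma oddh p : odd p -> p.+1 = 2 * (p.-1./2).+1.
Proof. case: p => //= p op. have := odd_double_half p. rewrite (negPf op) add0n -muln2 => E. lia. Qed.
Section RealPart.
Local Unset Implicit Arguments.
Local Open Scope R_scope.
Lemma bern (x : R) (k : nat) : 0 <= x -> 1 + INR k * x <= (1 + x)^k.
Proof.
move=> hx; elim: k => [|k IH]; first (simpl; lra).
rewrite S_INR [(1 + x) ^ k.+1]/=.
have := pos_INR k => hk.
nra.
Qed.

Lemma grow (c K : R) (q0 : nat) : 1 <= c -> 0 <= K -> 1 <= (c-1)*(INR q0+1) ->
  K*(INR q0+1) <= c^q0 -> forall j, K*(INR (q0+j)+1) <= c^(q0+j).
Proof.
move=> c1 K0 h1 h2; elim=> [|j IH]; first by rewrite addn0.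
rewrite addnS S_INR [c ^ (q0 + j).+1]/=.
have : INR q0 <= INR (q0 + j) by apply: le_INR; lia.
move=> hle.
have : 1 <= (c-1)*(INR (q0+j)+1) by nra.
nra.
Qed.

Lemma block (rho c K : R) (L q0 n : nat) : 1 <= rho -> c <= rho^L -> 1 <= c -> 0 <= K ->
  1 <= (c-1)*(INR q0+1) -> K*(INR q0+1) <= c^q0 -> (0 < L)%N -> INR q0 * INR L <= INR n ->
  K * INR n <= INR L * rho^n.
Proof.
move=> r1 crL c1 K0 h1 h2 L0 hnR.
have hn : (q0 * L <= n)%N by apply/leP; apply: INR_le; rewrite mult_INR.

set q := (n %/ L)%N.
have hq : (q0 <= q)%N by rewrite leq_divRL.
have Hg : K*(INR q+1) <= c^q.
  have -> : q = (q0 + (q - q0))%nat by rewrite -[(_ + _)%nat]/(q0 + (q - q0))%N subnKC.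
  exact: grow.
have Hn : n = (q * L + n %% L)%nat by rewrite -[(_ + _)%nat]/(q * L + n %% L)%N -divn_eq.
have Hr : (n %% L < L)%N by rewrite ltn_pmod.
have HnL : INR n <= INR L * (INR q + 1).
  rewrite -S_INR -mult_INR; apply: le_INR.
  move: Hr; set r := (n %% L)%N; rewrite {1}Hn; lia.
have Hrho : c^q <= rho^n.
  rewrite Hn pow_add pow_mult -!pow_mult Nat.mul_comm pow_mult.
  have := pow_le (rho^L) q ltac:(have := pow_R1_Rle rho L r1; lra).
  have := pow_R1_Rle rho (n %% L) r1.
  have : c^q <= (rho^L)^q by apply: pow_incr; lra.
  have := pow_le c q ltac:(lra).
  nra.
have := pos_INR L; have := pos_INR q; nra.
Qed.

Lemma INR_expn a b : INR (a ^ b)%N = INR a ^ b.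
Proof. elim: b => [|b IH]; first by rewrite expn0. by rewrite expnS -multE mult_INR IH. Qed.

Lemma Rpower_pos x y : 0 < Rpower x y.
Proof. rewrite /Rpower; exact: exp_pos. Qed.

Lemma INR_num k : INR k = IZR (Z.of_nat k).
Proof. exact: INR_IZR_INZ. Qed.

Definition X (P : nat) := Rpower (INR P) (782/1000).

Lemma X_1000 P : (0 < P)%N -> X P ^ 1000 = INR P ^ 782.
Proof.
move=> P0.
have HP : 0 < INR P by apply: lt_0_INR; apply/ltP.
rewrite /X -(Rpower_pow 1000); last exact: Rpower_pos.
rewrite Rpower_mult -Rpower_pow //.
congr Rpower; rewrite !INR_num /=; lra.
Qed.

Lemma fixed_case (P M n q0 : nat) (c K : R) :
  (0 < P)%N -> (0 < M)%N ->
  c * INR P ^ 782 <= INR M ^ 1000 -> 1 < c -> 1 <= (c-1)*(INR q0+1) ->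
  K*(INR q0+1) <= c^q0 -> INR q0 * 1000 <= INR n -> 1000 * INR M ^ 2 <= K ->
  INR n * INR M ^ 2 <= (INR M * / X P)^n.
Proof.
move=> P0 M0 hc c1 hq0 hK hn hMK.
have HX : 0 < X P by exact: Rpower_pos.
have HM : 0 < INR M by apply: lt_0_INR; apply/ltP.
have Hr1000 : (INR M * / X P)^1000 = INR M ^ 1000 * / INR P ^ 782.
  by rewrite Rpow_mult_distr pow_inv X_1000.
have HP782 : 0 < INR P ^ 782 by apply: pow_lt; apply: lt_0_INR; apply/ltP.
have Hc : c <= (INR M * / X P)^1000.
  rewrite Hr1000; apply: (Rmult_le_reg_r (INR P ^ 782)) => //.
  rewrite Rmult_assoc Rinv_l; lra.
have Hrho : 1 <= INR M * / X P.
  apply: (Rmult_le_reg_r (X P)) => //; rewrite Rmult_assoc Rinv_l; last lra.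
  rewrite Rmult_1_l Rmult_1_r.
  apply: Rnot_lt_le => hlt.
  have : INR M ^ 1000 <= X P ^ 1000 by apply: pow_incr; lra.
  rewrite X_1000 //.
  nra.
have hq : INR q0 * INR 1000 <= INR n by rewrite (INR_num 1000) /=; lra.
have := @block (INR M * / X P) c K 1000 q0 n
   Hrho Hc ltac:(lra) ltac:(have := pos_INR q0; nra) hq0 hK isT.
have := pos_INR n.
have -> : INR 1000 = 1000 by rewrite INR_num /=.
nra.
Qed.

Lemma numZ_le (a b : Z) : Z.leb a b = true -> IZR a <= IZR b.
Proof. by move=> /Z.leb_le; apply: IZR_le. Qed.
Lemma numZ_lt (a b : Z) : Z.ltb a b = true -> IZR a < IZR b.
Proof. by move=> /Z.ltb_lt; apply: IZR_lt. Qed.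

Lemma W_bound : 202/100 <= Rpower 29 (210/1000).
Proof.
apply: Rnot_lt_le => hlt.
have HW := Rpower_pos 29 (210/1000).
have : (Rpower 29 (210/1000))^100 <= (202/100)^100 by apply: pow_incr; lra.
rewrite -(Rpower_pow 100); last exact: Rpower_pos.
rewrite Rpower_mult.
have -> : 210/1000 * INR 100 = INR 21 by rewrite !INR_num /=; lra.
rewrite Rpower_pow; last lra.
have : (202/100)^100 < 29 ^ 21.
  rewrite Rpow_mult_distr pow_inv.
  apply: (Rmult_lt_reg_r (100 ^ 100)); first by apply: pow_lt; lra.
  rewrite Rmult_assoc Rinv_l; last by apply: pow_nonzero; lra.
  rewrite Rmult_1_r !pow_IZR -mult_IZR; apply: numZ_lt; vm_compute; reflexivity.
lra.
Qed.

Lemma n_le_pow (n : nat) : 1000000 <= INR n -> INR n <= (101/100)^n.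
Proof.
move=> hn.
have h100 : 2 <= (101/100)^100.
  have := bern (1/100) 100 ltac:(lra).
  have -> : 1 + 1/100 = 101/100 by lra.
  rewrite INR_num /=; lra.
have h30 : 100 * (INR 30 + 1) <= 2 ^ 30.
  rewrite INR_num; change (Z.of_nat 30) with (30 : Z); rewrite pow_IZR.
  have -> : 100 * (IZR 30 + 1) = IZR 3100 by rewrite -plus_IZR -mult_IZR.
  by apply: numZ_le; vm_compute.
have := @block (101/100) 2 100 100 30 n ltac:(lra) h100 ltac:(lra) ltac:(lra)
  ltac:(rewrite INR_num; change (Z.of_nat 30) with (30 : Z); lra) h30 isT
  ltac:(rewrite (INR_num 30) (INR_num 100); change (Z.of_nat 30) with (30 : Z); change (Z.of_nat 100) with (100 : Z); lra).
have -> : INR 100 = 100 by rewrite INR_num /=.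
lra.
Qed.

Lemma big_case (P n : nat) (m : R) : (29 <= P)%N -> INR P / 2 <= m <= INR P ->
  1000000 <= INR n -> INR n * m^2 <= (m * / X P)^n.
Proof.
move=> P29 [hm1 hm2] hn.
have HP29 : 29 <= INR P.
  have := le_INR 29 P ltac:(apply/leP; exact: P29).
  by rewrite INR_num.
have HP : 0 < INR P by lra.
set Y := Rpower (INR P) (8/1000).
set Z := Rpower (INR P) (210/1000).
have HX : 0 < X P by exact: Rpower_pos.
have HY : 0 < Y by exact: Rpower_pos.
have HZ : 202/100 <= Z.
  apply: Rle_trans W_bound _; apply: Rle_Rpower_l; lra.
have HPXYZ : INR P = X P * Y * Z.
  rewrite /X /Y /Z -!Rpower_plus.
  have -> : 782 / 1000 + 8 / 1000 + 210 / 1000 = 1 by lra.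
  by rewrite Rpower_1.
have Hrho : 101/100 * Y <= m * / X P.
  apply: (Rmult_le_reg_r (X P)) => //; rewrite (Rmult_assoc m) Rinv_l; last lra.
  rewrite Rmult_1_r; nra.
have HYn : INR P ^ 2 <= Y ^ n.
  rewrite /Y -Rpower_pow // -(Rpower_pow n); last exact: Rpower_pos.
  rewrite Rpower_mult; apply: Rle_Rpower; first lra.
  rewrite INR_num /=; lra.
have Hm2 : m ^ 2 <= INR P ^ 2 by apply: pow_incr; lra.
have H1 := n_le_pow n hn.
have : (101/100 * Y)^n <= (m * / X P)^n by apply: pow_incr; nra.
rewrite Rpow_mult_distr.
have := pow_le (101/100) n ltac:(lra).
have := pos_INR n.
have := pow2_ge_0 m.
nra.
Qed.

Lemma frac_pow_ge (a b : Z) (k : nat) (L : R) : 0 < IZR b ->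
  L * IZR b ^ k <= IZR a ^ k -> L <= (IZR a / IZR b)^k.
Proof.
move=> hb h; rewrite /Rdiv Rpow_mult_distr pow_inv.
have hbk : 0 < IZR b ^ k by apply: pow_lt.
apply: (Rmult_le_reg_r (IZR b ^ k)) => //.
rewrite Rmult_assoc Rinv_l; lra.
Qed.

Lemma finish1 (P n : nat) (m R : R) : (0 < P)%N -> 0 < m -> (0 < n)%N ->
  INR n * m^2 <= (m * / X P)^n -> m^n <= INR n * m^2 * R ->
  Rpower (INR P) (782/1000 * INR n) <= R.
Proof.
move=> P0 m0 n0 h1 h2.
have HX : 0 < X P by exact: Rpower_pos.
rewrite -Rpower_mult Rpower_pow; last exact: Rpower_pos.
rewrite -/(X P).
move: h1; rewrite Rpow_mult_distr pow_inv => h1.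
have hXn : 0 < X P ^ n by apply: pow_lt.
have hn : 0 < INR n by apply: lt_0_INR; apply/ltP.
have hm2 : 0 < m ^ 2 by apply: pow_lt.
have h3 : INR n * m ^ 2 * X P ^ n <= m ^ n.
  have := Rmult_le_compat_r (X P ^ n) _ _ ltac:(lra) h1.
  rewrite (Rmult_assoc (m ^ n)) Rinv_l; lra.
have hnm : 0 < INR n * m ^ 2 by nra.
nra.
Qed.

Lemma finish2 (P n : nat) (m R : R) : INR P + 1 = 2 * m -> 0 < m ->
  1000000 <= INR n -> m^n <= INR n * m^2 * R ->
  ((INR P + 1)/(20001/10000))^(n-2) <= R.
Proof.
move=> hPm m0 hn h.
set k := (n - 2)%N.
have Hnk : n = (k + 2)%nat by rewrite /k -[(_ + _)%nat]/(n - 2 + 2)%N subnK //; apply/leP; apply: INR_le; rewrite INR_num /=; lra.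
have HnR : INR n = INR k + 2 by rewrite Hnk plus_INR INR_num /=.
have HkR : 999998 <= INR k by lra.
have Hbase : (INR P + 1)/(20001/10000) = m * (20000/20001) by rewrite hPm; field.
rewrite Hbase Rpow_mult_distr.
set rho := 20001/20000.
have h2 : 2 <= rho ^ 20000.
  have := bern (1/20000) 20000 ltac:(lra).
  have -> : 1 + 1/20000 = rho by rewrite /rho; lra.
  rewrite INR_num; change (Z.of_nat 20000) with (20000 : Z); lra.
have h49 : 20001 * (INR 49 + 1) <= 2 ^ 49.
  rewrite INR_num; change (Z.of_nat 49) with (49 : Z); rewrite pow_IZR.
  have -> : 20001 * (IZR 49 + 1) = IZR 1000050 by rewrite -plus_IZR -mult_IZR.
  by apply: numZ_le; vm_compute.
have := @block rho 2 20001 20000 49 k ltac:(rewrite /rho; lra) h2 ltac:(lra) ltac:(lra)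
  ltac:(rewrite INR_num; change (Z.of_nat 49) with (49 : Z); lra) h49 isT
  ltac:(rewrite (INR_num 49) (INR_num 20000); change (Z.of_nat 49) with (49 : Z); change (Z.of_nat 20000) with (20000 : Z); lra).
rewrite (INR_num 20000); change (Z.of_nat 20000) with (20000 : Z) => hb.
have hnr : INR n <= rho ^ k by lra.
have hd : (20000/20001)^k * rho^k = 1.
  by rewrite -Rpow_mult_distr /rho (_ : 20000 / 20001 * (20001 / 20000) = 1) ?pow1 //; field.
have hm : m ^ n = m ^ k * m ^ 2 by rewrite Hnk pow_add.
have hm2 : 0 < m ^ 2 by apply: pow_lt.
have hmk : m ^ k <= INR n * R.
  apply: (Rmult_le_reg_r (m^2)) => //; nra.
have hdk : 0 <= (20000/20001)^k by apply: pow_le; lra.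
have hmk0 : 0 <= m ^ k by apply: pow_le; lra.
have hR : 0 <= R.
  apply: Rnot_lt_le => hlt.
  have : 0 < m ^ n by apply: pow_lt.
  have : 0 < INR n * m ^ 2 by nra.
  nra.
have e1 : m ^ k * (20000/20001)^k <= INR n * R * (20000/20001)^k by apply: Rmult_le_compat_r.
have e2 : INR n * R * (20000/20001)^k <= rho ^ k * R * (20000/20001)^k.
  apply: Rmult_le_compat_r => //; apply: Rmult_le_compat_r => //.
nra.
Qed.

Lemma final (P n : nat) (m R : R) :
  (P = 19 \/ P = 23 \/ 29 <= P)%N -> INR P + 1 = 2 * m -> (10^6 <= n)%N ->
  m^n <= INR n * m^2 * R ->
  Rpower (INR P) (782/1000 * INR n) <= R /\ ((INR P + 1)/(20001/10000))^(n-2) <= R.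
Proof.
move=> hP hm hn h.
have hnR : 1000000 <= INR n.
  move/leP: hn => /le_INR; rewrite INR_expn INR_num /=; lra.
have HP0 : (0 < P)%N by case: hP => [->|[->|]] //; apply: leq_trans.
have HPR : 0 < INR P by apply: lt_0_INR; apply/ltP.
have m0 : 0 < m by lra.
split; last exact: (finish2 _ _ _ _ hm m0 hnR h).
have n0 : (0 < n)%N by apply/ltP; apply: INR_lt; rewrite INR_num /=; lra.
apply: (finish1 _ _ _ _ HP0 m0 n0) => //.
case: hP => [EP|[EP|HP]].
- have Em : m = INR 10.
    move: hm; rewrite EP !INR_num /=; lra.
  rewrite EP Em.
  apply: (@fixed_case 19 10 n 1000 (103/100) 100000) => //.
  + rewrite !INR_num; change (Z.of_nat 19) with (19 : Z); change (Z.of_nat 10) with (10 : Z).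
    rewrite !pow_IZR /Rdiv Rmult_comm -Rmult_assoc -mult_IZR.
    apply: (Rmult_le_reg_r 100); first lra.
    rewrite Rmult_assoc Rinv_l; last lra.
    rewrite Rmult_1_r -mult_IZR; apply: numZ_le; vm_compute; reflexivity.
  + lra.
  + rewrite INR_num; change (Z.of_nat 1000) with (1000 : Z); lra.
  + rewrite INR_num; change (Z.of_nat 1000) with (1000 : Z).
    apply: frac_pow_ge; first lra.
    rewrite pow_IZR pow_IZR.
    have -> : 100000 * (IZR 1000 + 1) = IZR 100100000 by rewrite -plus_IZR -mult_IZR.
    rewrite -mult_IZR; apply: numZ_le; vm_compute; reflexivity.
  + rewrite (INR_num 1000); change (Z.of_nat 1000) with (1000 : Z); lra.
  + rewrite INR_num; change (Z.of_nat 10) with (10 : Z); lra.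
- have Em : m = INR 12.
    move: hm; rewrite EP !INR_num /=; lra.
  rewrite EP Em.
  apply: (@fixed_case 23 12 n 30 2 144000) => //.
  + rewrite !INR_num; change (Z.of_nat 23) with (23 : Z); change (Z.of_nat 12) with (12 : Z).
    rewrite !pow_IZR -mult_IZR; apply: numZ_le; vm_compute; reflexivity.
  + lra.
  + rewrite INR_num; change (Z.of_nat 30) with (30 : Z); lra.
  + rewrite INR_num; change (Z.of_nat 30) with (30 : Z); rewrite pow_IZR.
    have -> : 144000 * (IZR 30 + 1) = IZR 4464000 by rewrite -plus_IZR -mult_IZR.
    apply: numZ_le; vm_compute; reflexivity.
  + rewrite (INR_num 30); change (Z.of_nat 30) with (30 : Z); lra.
  + rewrite INR_num; change (Z.of_nat 12) with (12 : Z); lra.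
- apply: big_case => //; split; first lra.
  have : 1 <= INR P.
    have := le_INR 29 P ltac:(apply/leP; exact: HP). rewrite INR_num /=; lra.
  lra.
Qed.
End RealPart.

Theorem corollary14 (p n : nat) :
  prime p -> (19 <= p)%N -> (10 ^ 6 <= n)%N ->
  Rle (Rpower (INR p) (Rmult (Rdiv 782 1000) (INR n))) (INR (r3 p n)) /\
  Rle (pow (Rdiv (Rplus (INR p) 1) (Rdiv 20001 10000)) (n - 2)) (INR (r3 p n)).
Proof.
move=> pr p19 hn.
have p2 : (2 < p)%N by apply: leq_trans p19.
have op : odd p by case: (even_prime pr) => // E; rewrite E in p19.
have Hc := @count_bound p n pr p2.
have n0 : (0 < n)%N by apply: leq_trans hn; rewrite expn_gt0.
have Hc2 : ((p.-1./2).+1 ^ n <= n * (p.-1./2).+1 ^ 2 * r3 p n)%N.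
  apply: leq_trans Hc _; rewrite leq_mul2r; apply/orP; right; nia.
have HR := le_INR _ _ (elimT leP Hc2).
rewrite -!multE !mult_INR !INR_expn in HR.
apply: (final p n (INR (p.-1./2).+1) (INR (r3 p n))) => //.
- case: (ltnP p 29) => H; last by auto.
  by case: (small p19 H pr) => ->; auto.
- rewrite -S_INR (oddh op) -multE mult_INR INR_num; reflexivity.
apply: Rle_trans HR _; right; simpl; ring.
Qed.
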